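(* Let $n\ge 2$, and let $S$ be a semitransitive subsemigroup of $\mathcal{I}_n\setminus\mathcal{S}_n$ with $|S|\le 2n$, with transitivity blocks $X_1,\dots,X_m$. For any $x,y$ belonging to the same transitivity block there is $\alpha\in S$ which has an arrow $x\to y$ and has no arrow from $X_p$ to $X_q$ with $p\neq q$.
   Context: $\mathcal{I}_n$ denotes the symmetric inverse semigroup of all partial injective maps of $X=\{1,\dots,n\}$ to itself (including the empty map $0$), with maps written on the right and composed left to right. $\mathcal{S}_n$ is the symmetric group on $X$. A semigroup $S$ of partial transformations of $X$ is semitransitive if for all $x,y\in X$ there is $\varphi\in S$ with $x\varphi=y$ or $y\varphi=x$. For $x,y\in X$ write $x\ge y$ if $x\varphi=y$ for some $\varphi\in S$; for semitransitive $S$ this is a total preorder. The transitivity blocks $X_1,\dots,X_m$ are the equivalence classes of this preorder (i.e. $x,y$ in the same block iff $x\ge y$ and $y\ge x$), numbered so that for $x\in X_i$, $y\in X_j$ one has $x\ge y$ iff $i\le j$. An element $\alpha\in S$ has an arrow $x\to y$ if $x\in\mathrm{dom}(\alpha)$ and $x\alpha=y$; the arrow is from block $X_p$ to block $X_q$ if $x\in X_p$, $y\in X_q$. *)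

(* Defs.v *)
(* X = {1..n} is modelled by 'I_n. *)
From mathcomp Require Import all_boot.
Set Implicit Arguments. Unset Strict Implicit. Unset Printing Implicit Defensive.

(* A partial transformation of 'I_n: x is in the domain iff a x = Some _. *)
Definition ptrans (n : nat) := {ffun 'I_n -> option 'I_n}.

(* Composition written on the right, left to right: x (a b) = (x a) b. *)
Definition pcomp n (a b : ptrans n) : ptrans n := [ffun x => obind b (a x)].

Definition pinj n (a : ptrans n) : Prop :=
  forall u v w : 'I_n, a u = Some w -> a v = Some w -> u = v.

(* a is not a permutation (not in S_n): some point is outside its domain
   (for a partial injection of a finite set this is exactly a \notin S_n). *)
Definition not_perm n (a : ptrans n) : Prop := exists u : 'I_n, a u = None.

Definition subsemigroup_In_minus_Sn n (S : {set ptrans n}) : Prop :=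
  (forall a, a \in S -> pinj a /\ not_perm a) /\
  (forall a b, a \in S -> b \in S -> pcomp a b \in S).

Definition sge n (S : {set ptrans n}) (x y : 'I_n) : Prop :=
  exists2 phi, phi \in S & phi x = Some y.

Definition semitransitive n (S : {set ptrans n}) : Prop :=
  forall x y : 'I_n, sge S x y \/ sge S y x.

Definition same_block n (S : {set ptrans n}) (x y : 'I_n) : Prop :=
  sge S x y /\ sge S y x.

(* Main.v *)
Require Import Defs.
From mathcomp Require Import all_boot.
Set Implicit Arguments. Unset Strict Implicit. Unset Printing Implicit Defensive.

Lemma iter_period (T : Type) (f : T -> T) p d :
  (forall o, iter (p + d) f o = iter p f o) ->
  forall t c o, p <= c -> iter (c + t * d) f o = iter c f o.
Proof.
move=> H; elim=> [|t IH] c o hc; first by rewrite mul0n addn0.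
rewrite mulSnr addnA.
have hc' : p <= c + t * d by apply: leq_trans hc (leq_addr _ _).
rewrite -{1}(subnK hc') -addnA.
by rewrite iterD H -iterD subnK // IH.
Qed.

Section Main.
Variables (n : nat) (S : {set ptrans n}).
Hypothesis HS : subsemigroup_In_minus_Sn S.
Variable g : ptrans n.
Hypothesis gS : g \in S.

Definition F (o : option 'I_n) := obind g o.
Definition G k : ptrans n := [ffun u => iter k.+1 F (Some u)].

Lemma iterF_None k : iter k F None = None.
Proof. by elim: k => //= k ->. Qed.

Lemma G_obind k o : obind (G k) o = iter k.+1 F o.
Proof. by case: o => [u|] /=; rewrite ?ffunE // iterF_None. Qed.

Lemma G_in k : G k \in S.
Proof.
elim: k => [|k IH].
  have -> : @eq (ptrans n) (G 0) g by apply/ffunP => u; rewrite ffunE.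
  by [].
have -> : @eq (ptrans n) (G k.+1) (Defs.pcomp (G k) g).
  by apply/ffunP => u; rewrite !ffunE.
by apply: HS.2.
Qed.

Lemma exists_idem : exists m, 0 < m /\ forall o, iter (m + m) F o = iter m F o.
Proof.
pose f := fun k : 'I_(#|S|.+1) => G k.
have : ~~ injectiveb f.
  apply/negP => /injectiveP inj.
  have := card_codom inj; rewrite card_ord => h.
  have : #|codom f| <= #|S|.
    apply: subset_leq_card; apply/subsetP => z /codomP [k ->]; exact: G_in.
  by rewrite h ltnn.
case/injectivePn => i [j nij eqf].
have key : forall (i j : nat), i < j -> G i = G j -> 
   exists m, 0 < m /\ forall o, iter (m + m) F o = iter m F o.
  move=> a b ab eab.
  have per : forall o, iter (a.+1 + (b - a)) F o = iter a.+1 F o.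
    move=> [u|]; last by rewrite !iterF_None.
    have -> : a.+1 + (b - a) = b.+1 by rewrite addSn subnKC // ltnW.
    by have := congr1 (fun h : ptrans n => h u) eab; rewrite !ffunE => ->.
  have d0 : 0 < b - a by rewrite subn_gt0.
  exists (a.+1 * (b - a)); split; first by rewrite muln_gt0.
  move=> o; apply: (iter_period per) ; by rewrite leq_pmulr.
case: (ltngtP i j) => hij.
- by apply: (key i j hij).
- by apply: (key j i hij).
- by move: nij; rewrite (val_inj hij) eqxx.
Qed.

End Main.

Theorem lemma2p2 (n : nat) (S : {set ptrans n}) :
  2 <= n ->
  subsemigroup_In_minus_Sn S ->
  semitransitive S ->
  #|S| <= 2 * n ->
  forall x y : 'I_n, same_block S x y ->
  exists2 alpha, alpha \in S &
    alpha x = Some y /\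
    (forall u v : 'I_n, alpha u = Some v -> same_block S u v).
Proof.
move=> _ HS _ _ x y [[a aS axy] [b bS byx]].
pose g := Defs.pcomp a b.
have gS : g \in S by apply: HS.2.
have gx : g x = Some x by rewrite /g ffunE axy /=.
have iterx : forall k, iter k (F g) (Some x) = Some x.
  by elim=> //= k ->; rewrite /F /= gx.
have [m [m0 Hm]] := exists_idem HS gS.
case: m m0 Hm => // m' _ Hm.
pose e := G g m'.
have eS : e \in S by apply: G_in.
have efix : forall u w, e u = Some w -> u = w.
  move=> u w euw.
  have ew : e w = Some w.
    rewrite /e ffunE -euw /e ffunE -iterD Hm.
    by have := euw; rewrite /e ffunE.
  exact: ((HS.1 e eS).1 u w w euw ew).
exists (Defs.pcomp e a); first by apply: HS.2.
split; first by rewrite ffunE /e ffunE iterx /= axy.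
move=> u v; rewrite ffunE.
case eu: (e u) => [w|] //= awv.
have uw := efix _ _ eu; subst w.
split; first by exists a.
exists (Defs.pcomp b (G g (m' + m'))); first by apply: HS.2 => //; apply: G_in.
rewrite ffunE G_obind.
have : e u = Some u := eu.
rewrite /e ffunE -Hm => <-.
rewrite addSn addnS [in RHS]iterSr.
by rewrite /F /= /g ffunE awv.
Qed.
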